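(* Let $\mathbf D$ be a set of tilings containing both $\emptyset$ and $\Lambda$ (a normal super-domain). Then $\mathbf D$ is a clique (its elements are pairwise compatible) if and only if $\mathbf D$ is a Condorcet super-domain.
   Context: Fix an integer $n\ge 3$ and write $[n]=\{1,\dots,n\}$. Let $\Lambda$ be the set of 3-element subsets of $[n]$; a triple $\{i,j,k\}$ with $i<j<k$ is written $ijk$. For a 4-element subset $F=\{i<j<k<l\}$ of $[n]$, the stick of $F$ is the sequence $(ijk,\ ijl,\ ikl,\ jkl)$. A tiling (the inversion set of a rhombus tiling of the zonogon $Z(n;2)$) is a subset $T\subseteq\Lambda$ such that for every 4-element $F\subseteq[n]$, $T\cap\mathrm{stick}(F)$ is an initial segment or a final segment of the stick (empty set and whole stick allowed). Two tilings $T,T'$ are compatible if both $T\cap T'$ and $T\cup T'$ are tilings. For a finite set $V$ of odd cardinality and tilings $(T_v)_{v\in V}$, $sm((T_v)_{v\in V})$ is the set of triples lying in $T_v$ for more than $|V|/2$ indices $v$. A set $\mathbf D$ of tilings is a Condorcet super-domain if for every finite $V$ of odd cardinality and every family $(T_v)_{v\in V}$ with all $T_v\in\mathbf D$, $sm((T_v)_{v\in V})$ is a tiling. *)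

(* Defs.v *)
From mathcomp Require Import all_boot.
Set Implicit Arguments. Unset Strict Implicit. Unset Printing Implicit Defensive.

(* Elements of [n] = {1..n} are represented by 'I_n = {0..n-1} (order-preserving shift). *)

Definition Lambda (n : nat) : {set {set 'I_n}} := [set A : {set 'I_n} | #|A| == 3].

(* The stick of a 4-subset F = {i<j<k<l}: (ijk, ijl, ikl, jkl), i.e. F minus
   its largest, second-largest, second-smallest, smallest element.  Given the
   elements listed increasingly as e : nat -> 'I_n, the p-th stick entry
   (p = 0..3) is F minus e (3 - p). *)
Definition stick_entry (n : nat) (F : {set 'I_n}) (e : nat -> 'I_n) (p : nat)
  : {set 'I_n} := F :\ e (3 - p).

Definition segment_ok (n : nat) (T : {set {set 'I_n}}) (s : nat -> {set 'I_n}) :=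
  exists m, m <= 4 /\
    ((forall p, p < 4 -> (s p \in T) = (p < m)) \/
     (forall p, p < 4 -> (s p \in T) = (4 - m <= p))).

Definition tiling (n : nat) (T : {set {set 'I_n}}) : Prop :=
  T \subset Lambda n /\
  forall i j k l : 'I_n, i < j -> j < k -> k < l ->
    segment_ok T (stick_entry [set i; j; k; l]
                   (fun p => match p with 0 => i | 1 => j | 2 => k | _ => l end)).

Definition compatible (n : nat) (T T' : {set {set 'I_n}}) : Prop :=
  tiling (T :&: T') /\ tiling (T :|: T').

Definition sm (n : nat) (V : finType) (T : V -> {set {set 'I_n}}) : {set {set 'I_n}} :=
  [set t : {set 'I_n} | #|V| < 2 * #|[set v | t \in T v]|].

Definition clique (n : nat) (D : {set {set 'I_n}} -> Prop) : Prop :=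
  forall T T', D T -> D T' -> compatible T T'.

Definition condorcet_superdomain (n : nat) (D : {set {set 'I_n}} -> Prop) : Prop :=
  forall (V : finType) (T : V -> {set {set 'I_n}}),
    odd #|V| -> (forall v, D (T v)) -> tiling (sm T).

(* Main.v *)
Require Import Defs.
From mathcomp Require Import all_boot.
From mathcomp Require Import zify.

Definition pf (f : nat -> bool) := forall p q r, p < q -> q < r -> r < 4 -> f p = f r -> f q = f p.

Lemma pf_of_seg (f : nat -> bool) :
  (exists m, m <= 4 /\
    ((forall p, p < 4 -> f p = (p < m)) \/ (forall p, p < 4 -> f p = (4 - m <= p)))) -> pf f.
Proof.
move=> [m [Hm [H|H]]] p q r pq qr r4; rewrite !H; try lia.
Qed.

Lemma four (f g : nat -> bool) :
  [/\ f 0 = g 0, f 1 = g 1, f 2 = g 2 & f 3 = g 3] -> forall p, p < 4 -> f p = g p.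
Proof. by case=> ? ? ? ? [|[|[|[|p]]]]. Qed.

Lemma seg_of_pf (f : nat -> bool) : pf f ->
  (exists m, m <= 4 /\
    ((forall p, p < 4 -> f p = (p < m)) \/ (forall p, p < 4 -> f p = (4 - m <= p)))).
Proof.
move=> H.
suff: exists m, m <= 4 /\
   ([/\ f 0 = (0 < m), f 1 = (1 < m), f 2 = (2 < m) & f 3 = (3 < m)] \/
    [/\ f 0 = (4 - m <= 0), f 1 = (4 - m <= 1), f 2 = (4 - m <= 2) & f 3 = (4 - m <= 3)]).
  move=> [m [Hm [E|E]]]; exists m; split=> //; [left; exact: (@four f (fun p => p < m) E) | right; exact: (@four f (fun p => 4 - m <= p) E)].
have h1 := H 0 1 2 isT isT isT; have h2 := H 0 1 3 isT isT isT.
have h3 := H 0 2 3 isT isT isT; have h4 := H 1 2 3 isT isT isT.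
move: h1 h2 h3 h4.
case: (f 0); case: (f 1); case: (f 2); case: (f 3); move=> h1 h2 h3 h4.
all: first [ by move: (h1 erefl) | by move: (h2 erefl) | by move: (h3 erefl) | by move: (h4 erefl)
 | by exists 0; split => //; left | by exists 1; split => //; left
 | by exists 2; split => //; left | by exists 3; split => //; left
 | by exists 4; split => //; left
 | by exists 1; split => //; right | by exists 2; split => //; right
 | by exists 3; split => //; right | idtac ].
Qed.

Lemma core (V : finType) (Ap Aq Ar : {set V}) :
  (forall u w, (u \in Ap) || (w \in Ap) -> (u \in Ar) || (w \in Ar) -> (u \in Aq) || (w \in Aq)) ->
  #|V| < 2 * #|Ap| -> #|V| < 2 * #|Ar| -> #|V| < 2 * #|Aq|.
Proof.
move=> H hp hr.
have [sp|] := boolP (Ap \subset Aq).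
  have := subset_leq_card sp; lia.
case/subsetPn => u up uq.
have [sr|] := boolP (Ar \subset Aq).
  have := subset_leq_card sr; lia.
case/subsetPn => w wr wq.
by have := H u w; rewrite up wr (negbTE uq) (negbTE wq) orbT => /(_ isT isT).
Qed.

Lemma card3 (a b c : bool) : #|[set v : 'I_3 | if val v == 0 then a else if val v == 1 then b else c]| = a + b + c.
Proof.
rewrite cardsE -sum1_card big_mkcond !big_ord_recl big_ord0 /=.
by case: a; case: b; case: c.
Qed.

Theorem proposition2 (n : nat) (D : {set {set 'I_n}} -> Prop) :
  3 <= n ->
  (forall T, D T -> tiling T) ->
  D set0 -> D (Lambda n) ->
  (clique D <-> condorcet_superdomain D).
Proof.
move=> n3 HT D0 DL; split.
- move=> Hcl V T Hodd HD; split.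
  + apply/subsetP => t; rewrite inE => Ht.
    have: [set v | t \in T v] != set0.
      by apply/negP => /eqP E; rewrite E cards0 in Ht.
    case/set0Pn => v; rewrite inE => tv.
    by have [/subsetP + _] := HT _ (HD v); apply.
  + move=> i j k l ij jk kl.
    set s := stick_entry _ _.
    apply: seg_of_pf => p q r pq qr r4.
    rewrite !inE.
    have Hpf : forall u w, pf (fun x => s x \in T u :|: T w) /\ pf (fun x => s x \in T u :&: T w).
      move=> u w; have [[_ H1] [_ H2]] := Hcl _ _ (HD u) (HD w).
      by split; apply: pf_of_seg; [apply: H2 | apply: H1].
    set A := fun x => [set v | s x \in T v].
    have Hj : forall u w, (u \in A p) || (w \in A p) -> (u \in A r) || (w \in A r) ->
                (u \in A q) || (w \in A q).
      move=> u w; have [H _] := Hpf u w; have := H p q r pq qr r4.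
      rewrite !inE => Hh h1 h2; by rewrite Hh h1 // h2.
    have Hm : forall u w, (u \in ~: A p) || (w \in ~: A p) -> (u \in ~: A r) || (w \in ~: A r) ->
                (u \in ~: A q) || (w \in ~: A q).
      move=> u w; have [_ H] := Hpf u w; have := H p q r pq qr r4.
      rewrite !inE -!negb_and => Hh h1 h2; apply/negP => h3.
      have := Hh; rewrite (negbTE h1) (negbTE h2) => /(_ erefl).
      by rewrite h3.
    have cp := cardsC (A p); have cq := cardsC (A q); have cr := cardsC (A r).
    have := odd_double_half #|V|; rewrite Hodd /= -muln2 => hN.
    rewrite -/(A p) -/(A q) -/(A r).
    case: (ltnP #|V| (2 * #|A p|)) => hp; case: (ltnP #|V| (2 * #|A r|)) => hr //= _.
    * by rewrite (@core V _ _ _ Hj hp hr).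
    * apply/negbTE; rewrite -leqNgt; apply/negP => hq.
      have h1 : #|V| < 2 * #|~: A p|.
        move: cp cq cr hN hp hr hq; set N := #|V|; set h := N./2; lia.
      have h2 : #|V| < 2 * #|~: A r|.
        move: cp cq cr hN hp hr hq; set N := #|V|; set h := N./2; lia.
      have h3 : #|V| < 2 * #|~: A q| := @core V _ _ _ Hm h1 h2.
      move: cp cq cr hN hp hr hq h3; set N := #|V|; set h := N./2; lia.
- move=> Hc T T' DT DT'.
  pose F (X : {set {set 'I_n}}) := fun v : 'I_3 =>
     if val v == 0 then T else if val v == 1 then T' else X.
  have Hsm : forall X, D X -> tiling (sm (F X)).
    move=> X DX; apply: Hc; first by rewrite card_ord.
    move=> v; rewrite /F.
    by case: ifP => _ //; case: ifP.
  have E : forall X t, (t \in sm (F X)) =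
     (3 < 2 * #|[set v : 'I_3 | if val v == 0 then t \in T else if val v == 1 then t \in T'
                                  else t \in X]|).
    move=> X t; rewrite inE card_ord.
    have -> : [set v | t \in F X v] = [set v : 'I_3 | if val v == 0 then t \in T
                  else if val v == 1 then t \in T' else t \in X].
      by apply/setP => v; rewrite !inE /F; case: ifP => _ //; case: ifP.
    by [].
  split.
  + have -> : T :&: T' = sm (F set0).
      apply/setP => t; rewrite E card3 !inE.
      by case: (t \in T); case: (t \in T').
    exact: Hsm.
  + have -> : T :|: T' = sm (F (Lambda n)).
      have [/subsetP sT _] := HT _ DT; have [/subsetP sT' _] := HT _ DT'.
      apply/setP => t; rewrite E card3 in_setU.
      case hT: (t \in T); case hT': (t \in T');
        rewrite ?(sT _ hT) ?(sT' _ hT') //=.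
      by case: (t \in Lambda n).
    exact: Hsm.
Qed.
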